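(* Fix $\mu,\nu$ with $\mu>-3$ and $|\nu|<\mu+3$, and fix $x>0$. Then the function $\delta\mapsto \tilde{t}_{\mu+\delta+1,\nu+\delta+1}(x)/\tilde{t}_{\mu+\delta,\nu+\delta}(x)$ is strictly decreasing on $(0,\infty)$.
   Context: For real $\mu,\nu$ the (normalized) modified Lommel function of the first kind is $$\tilde{t}_{\mu,\nu}(x)=\sum_{k=0}^\infty\frac{(\frac{1}{2}x)^{\mu+2k+1}}{\Gamma\big(k+\frac{\mu-\nu+3}{2}\big)\Gamma\big(k+\frac{\mu+\nu+3}{2}\big)},\quad x>0.$$ *)

(* Defs.v *)
From Stdlib Require Import Reals.
From Coquelicot Require Import Coquelicot.
Open Scope R_scope.

(* Euler's Gamma function, Gamma(s) = int_0^oo t^(s-1) e^(-t) dt, for s > 0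
   (only used at positive arguments), as an improper Riemann integral. *)
Definition Gamma (s : R) : R :=
  RInt_gen (fun t => Rpower t (s - 1) * exp (- t))
           (at_right 0) (Rbar_locally p_infty).

Definition lommel_t_term (mu nu x : R) (k : nat) : R :=
  Rpower (x / 2) (mu + 2 * INR k + 1)
  / (Gamma (INR k + (mu - nu + 3) / 2) * Gamma (INR k + (mu + nu + 3) / 2)).

Definition lommel_t (mu nu x : R) : R := Series (lommel_t_term mu nu x).

(* Main.v *)
Require Import Defs.
From Stdlib Require Import Reals Lra Lia Classical.
From Coquelicot Require Import Coquelicot.
Open Scope R_scope.
Fixpoint poch (c : R) (k : nat) : R :=
  match k with O => 1 | S k => poch c k * (c + INR k) end.

Lemma poch_pos c k : 0 < c -> 0 < poch c k.
Proof.
  intros Hc; induction k as [|k IH]; simpl; [lra|].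
  apply Rmult_lt_0_compat; auto. pose proof (pos_INR k); lra.
Qed.

Lemma poch_shift c k : poch c (S k) = c * poch (c + 1) k.
Proof.
  induction k as [|k IH]; [simpl; ring|].
  change (poch c (S (S k))) with (poch c (S k) * (c + INR (S k))).
  rewrite IH. change (poch (c+1) (S k)) with (poch (c+1) k * (c + 1 + INR k)).
  rewrite S_INR; ring.
Qed.

Lemma poch_ratio c1 c2 j n : 0 < c1 -> c1 <= c2 -> (j <= n)%nat ->
  exists R1 R2, 0 < R1 <= R2 /\ poch c1 (S n) = poch c1 (S j) * R1
                /\ poch c2 (S n) = poch c2 (S j) * R2.
Proof.
  intros H1 H2 Hjn; induction Hjn as [|n Hjn IH].
  - exists 1, 1; split; [lra|split; ring].
  - destruct IH as [R1 [R2 [HR [E1 E2]]]].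
    exists (R1 * (c1 + INR (S n))), (R2 * (c2 + INR (S n))).
    pose proof (pos_INR (S n)).
    split; [split|split].
    + apply Rmult_lt_0_compat; lra.
    + apply Rmult_le_compat; lra.
    + change (poch c1 (S (S n))) with (poch c1 (S n) * (c1 + INR (S n))); rewrite E1; ring.
    + change (poch c2 (S (S n))) with (poch c2 (S n) * (c2 + INR (S n))); rewrite E2; ring.
Qed.

Section Main.
Variables a z : R.
Hypothesis Ha : 0 < a.
Hypothesis Hz : 0 < z.

Definition pk (k : nat) := z ^ k / poch a k.
Definition gk (c : R) (k : nat) := / poch c (S k).
Definition tphi (c : R) (k : nat) := pk k / poch c k.
Definition tpsi (c : R) (k : nat) := pk k * gk c k.

Lemma pk_pos k : 0 < pk k.
Proof. unfold pk. apply Rdiv_lt_0_compat. apply pow_lt; auto. apply poch_pos; auto. Qed.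

Lemma pk_S k : pk (S k) = pk k * (z / (a + INR k)).
Proof.
  unfold pk; simpl. pose proof (poch_pos a k Ha). pose proof (pos_INR k).
  field; split; lra.
Qed.

Lemma gk_pos c k : 0 < c -> 0 < gk c k.
Proof. intros; unfold gk; apply Rinv_0_lt_compat, poch_pos; auto. Qed.

Lemma sum_nonpos (f : nat -> R) N : (forall j, (j <= N)%nat -> f j <= 0) -> sum_f_R0 f N <= 0.
Proof.
  induction N as [|N IH]; intros H; simpl.
  - apply H; lia.
  - pose proof (IH (fun j Hj => H j ltac:(lia))). pose proof (H (S N) ltac:(lia)). lra.
Qed.

Lemma sum_lin4 (u v w x : nat -> R) al be ga de N :
  sum_f_R0 (fun j => al * u j + be * v j - ga * w j - de * x j) N =
  al * sum_f_R0 u N + be * sum_f_R0 v N - ga * sum_f_R0 w N - de * sum_f_R0 x N.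
Proof. induction N as [|N IH]; simpl; [ring|rewrite IH; ring]. Qed.

Lemma Y_nonpos c1 c2 j n : 0 < c1 -> c1 < c2 -> (j < n)%nat ->
  (pk n * pk (S j) - pk j * pk (S n)) * (gk c2 n * gk c1 j - gk c2 j * gk c1 n) <= 0.
Proof.
  intros H1 H2 Hjn.
  assert (P1 : 0 <= pk n * pk (S j) - pk j * pk (S n)).
  { rewrite !pk_S. pose proof (pk_pos n); pose proof (pk_pos j).
    assert (INR j < INR n) by (apply lt_INR; auto).
    pose proof (pos_INR j).
    assert (z / (a + INR n) <= z / (a + INR j)).
    { unfold Rdiv; apply Rmult_le_compat_l; [lra|].
      apply Rinv_le_contravar; lra. }
    assert (0 <= pk n * pk j) by (apply Rmult_le_pos; lra).
    nra. }
  assert (P2 : gk c2 n * gk c1 j - gk c2 j * gk c1 n <= 0).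
  { destruct (poch_ratio c1 c2 j n H1 ltac:(lra) ltac:(lia)) as [R1 [R2 [HR [E1 E2]]]].
    unfold gk; rewrite E1, E2.
    pose proof (poch_pos c1 (S j) H1). pose proof (poch_pos c2 (S j) ltac:(lra)).
    rewrite !Rinv_mult.
    assert (/ R2 <= / R1) by (apply Rinv_le_contravar; lra).
    assert (0 < / poch c1 (S j)) by (apply Rinv_0_lt_compat; lra).
    assert (0 < / poch c2 (S j)) by (apply Rinv_0_lt_compat; lra).
    assert (0 < / poch c1 (S j) * / poch c2 (S j)) by (apply Rmult_lt_0_compat; lra).
    nra. }
  nra.
Qed.

Lemma finite_ineq c1 c2 N : 0 < c1 -> c1 < c2 ->
  sum_f_R0 (tpsi c2) N * sum_f_R0 (fun k => pk (S k) * gk c1 k) N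
  - sum_f_R0 (tpsi c1) N * sum_f_R0 (fun k => pk (S k) * gk c2 k) N <= 0.
Proof.
  intros H1 H2. induction N as [|N IH].
  - simpl; unfold tpsi; lra.
  - simpl sum_f_R0. set (n := S N).
    set (S2 := sum_f_R0 (tpsi c2) N). set (S1 := sum_f_R0 (tpsi c1) N).
    set (T1 := sum_f_R0 (fun k => pk (S k) * gk c1 k) N).
    set (T2 := sum_f_R0 (fun k => pk (S k) * gk c2 k) N).
    fold S2 S1 T1 T2 in IH.
    assert (E : pk n * gk c2 n * T1 + S2 * (pk (S n) * gk c1 n)
                - pk n * gk c1 n * T2 - S1 * (pk (S n) * gk c2 n)
              = sum_f_R0 (fun j => (pk n * pk (S j) - pk j * pk (S n)) *
                   (gk c2 n * gk c1 j - gk c2 j * gk c1 n)) N).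
    { rewrite (sum_eq _ (fun j => (pk n * gk c2 n) * (pk (S j) * gk c1 j)
          + (pk (S n) * gk c1 n) * tpsi c2 j - (pk n * gk c1 n) * (pk (S j) * gk c2 j)
          - (pk (S n) * gk c2 n) * tpsi c1 j)).
      2:{ intros i _; unfold tpsi; ring. }
      rewrite sum_lin4. unfold S1, S2, T1, T2. ring. }
    assert (Hs : sum_f_R0 (fun j => (pk n * pk (S j) - pk j * pk (S n)) *
                   (gk c2 n * gk c1 j - gk c2 j * gk c1 n)) N <= 0).
    { apply sum_nonpos; intros j Hj; apply Y_nonpos; auto; unfold n; lia. }
    replace (tpsi c2 n) with (pk n * gk c2 n) by reflexivity.
    replace (tpsi c1 n) with (pk n * gk c1 n) by reflexivity.
    nra.
Qed.


Lemma lim_inv_lin b : 0 < b -> is_lim_seq (fun n => / (b + INR n)) 0.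
Proof.
  intros Hb.
  assert (H : is_lim_seq (fun n => b + INR n) p_infty).
  { eapply is_lim_seq_plus. apply is_lim_seq_const. apply is_lim_seq_INR. simpl. constructor. }
  pose proof (is_lim_seq_inv _ _ H ltac:(discriminate)). simpl in H0. exact H0.
Qed.

Lemma lim_ratio b : 0 < b -> is_lim_seq (fun n => z / ((a + INR n) * (b + INR n))) 0.
Proof.
  intros Hb.
  apply is_lim_seq_ext with (fun n => z * (/ (a + INR n) * / (b + INR n))).
  { intros n. pose proof (pos_INR n). unfold Rdiv. rewrite Rinv_mult. ring. }
  replace (Finite 0) with (Finite (z * (0 * 0))) by (f_equal; ring).
  apply is_lim_seq_mult'. apply is_lim_seq_const.
  apply is_lim_seq_mult'; apply lim_inv_lin; auto.
Qed.

Lemma ex_series_ratio (t : nat -> R) b : 0 < b -> (forall n, 0 < t n) ->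
  (forall n, t (S n) = t n * (z / ((a + INR n) * (b + INR n)))) -> ex_series t.
Proof.
  intros Hb Ht Hr. apply ex_series_Rabs.
  apply (ex_series_DAlembert t 0). lra. intros n; specialize (Ht n); lra.
  apply is_lim_seq_ext with (fun n => z / ((a + INR n) * (b + INR n))).
  { intros n. rewrite Hr. pose proof (Ht n). pose proof (pos_INR n).
    rewrite Rabs_pos_eq. field. repeat split; lra.
    replace (t n * (z / ((a + INR n) * (b + INR n))) / t n) with (z / ((a + INR n) * (b + INR n))) by (field; repeat split; lra).
    apply Rlt_le, Rdiv_lt_0_compat; auto. apply Rmult_lt_0_compat; lra. }
  apply lim_ratio; auto.
Qed.

Lemma tphi_pos c k : 0 < c -> 0 < tphi c k.
Proof. intros; unfold tphi; apply Rdiv_lt_0_compat; [apply pk_pos|apply poch_pos; auto]. Qed.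
Lemma tpsi_pos c k : 0 < c -> 0 < tpsi c k.
Proof. intros; unfold tpsi; apply Rmult_lt_0_compat; [apply pk_pos|apply gk_pos; auto]. Qed.

Lemma ex_tphi c : 0 < c -> ex_series (tphi c).
Proof.
  intros Hc; apply (ex_series_ratio _ c Hc); [intros; apply tphi_pos; auto|].
  intros n; unfold tphi. rewrite pk_S. simpl poch.
  pose proof (poch_pos c n Hc); pose proof (poch_pos a n Ha); pose proof (pos_INR n).
  field. repeat split; lra.
Qed.

Lemma ex_tpsi c : 0 < c -> ex_series (tpsi c).
Proof.
  intros Hc; apply (ex_series_ratio _ (c + 1) ltac:(lra)); [intros; apply tpsi_pos; auto|].
  intros n; unfold tpsi, gk. rewrite pk_S.
  change (poch c (S (S n))) with (poch c (S n) * (c + INR (S n))). rewrite S_INR.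
  pose proof (poch_pos c (S n) Hc); pose proof (pos_INR n).
  field. repeat split; lra.
Qed.

Definition phi c := Series (tphi c).
Definition psi c := Series (tpsi c).

Lemma phi_eq c : 0 < c -> phi c = 1 + Series (fun k => pk (S k) * gk c k).
Proof.
  intros Hc; unfold phi. rewrite Series_incr_1 by (apply ex_tphi; auto).
  f_equal. unfold tphi, pk; simpl; field.
Qed.

Lemma ex_Phi c : 0 < c -> ex_series (fun k => pk (S k) * gk c k).
Proof.
  intros Hc. pose proof (ex_tphi c Hc) as H. apply ex_series_incr_1 in H.
  eapply ex_series_ext; [|exact H]. intros n; unfold tphi, gk; simpl. reflexivity.
Qed.

Lemma Series_nonneg (u : nat -> R) : (forall n, 0 <= u n) -> ex_series u -> 0 <= Series u.
Proof.
  intros H E. replace 0 with (Series (fun n => 0 * u n)).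
  2:{ rewrite Series_scal_l; ring. }
  apply Series_le; auto.
  intros n; split; [lra|]. rewrite Rmult_0_l; auto.
Qed.

Lemma phi_pos c : 0 < c -> 0 < phi c.
Proof.
  intros Hc; rewrite phi_eq by auto.
  assert (0 <= Series (fun k => pk (S k) * gk c k)).
  { apply Series_nonneg; [|apply ex_Phi; auto]. intros n.
    apply Rlt_le, Rmult_lt_0_compat; [apply pk_pos|apply gk_pos; auto]. }
  lra.
Qed.

Lemma psi_diff c1 c2 N : 0 < c1 -> c1 < c2 ->
  sum_f_R0 (tpsi c2) N - sum_f_R0 (tpsi c1) N <= / c2 - / c1.
Proof.
  intros H1 H2. induction N as [|N IH].
  - simpl. unfold tpsi, gk, pk; simpl. rewrite !Rmult_1_l, !Rplus_0_r. lra.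
  - simpl. assert (tpsi c2 (S N) <= tpsi c1 (S N)).
    { unfold tpsi. apply Rmult_le_compat_l. apply Rlt_le, pk_pos.
      destruct (poch_ratio c1 c2 O (S N) H1 ltac:(lra) ltac:(lia)) as [R1 [R2 [HR [E1 E2]]]].
      unfold gk. rewrite E1, E2. simpl. rewrite !Rmult_1_l, !Rplus_0_r.
      rewrite !Rinv_mult. apply Rmult_le_compat.
      apply Rlt_le, Rinv_0_lt_compat; lra. apply Rlt_le, Rinv_0_lt_compat; lra.
      apply Rinv_le_contravar; lra. apply Rinv_le_contravar; lra. }
    lra.
Qed.

Lemma sum_lim (u : nat -> R) : ex_series u -> is_lim_seq (fun N => sum_f_R0 u N) (Series u).
Proof.
  intros E. apply Series_correct in E.
  eapply is_lim_seq_ext; [intros n; apply sum_n_Reals|]. exact E.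
Qed.

Lemma main_ineq c1 c2 : 0 < c1 -> c1 < c2 -> psi c2 / phi c2 < psi c1 / phi c1.
Proof.
  intros H1 H2.
  assert (H2' : 0 < c2) by lra.
  pose proof (phi_pos c1 H1); pose proof (phi_pos c2 H2').
  assert (K : psi c2 * phi c1 - psi c1 * phi c2 <= / c2 - / c1).
  { rewrite !phi_eq by auto.
    set (D := fun N => sum_f_R0 (tpsi c2) N * (1 + sum_f_R0 (fun k => pk (S k) * gk c1 k) N)
                     - sum_f_R0 (tpsi c1) N * (1 + sum_f_R0 (fun k => pk (S k) * gk c2 k) N)).
    assert (L : is_lim_seq D (psi c2 * (1 + Series (fun k => pk (S k) * gk c1 k))
                     - psi c1 * (1 + Series (fun k => pk (S k) * gk c2 k)))).
    { unfold D. apply is_lim_seq_minus'; apply is_lim_seq_mult';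
        try (apply sum_lim, ex_tpsi; auto);
        apply is_lim_seq_plus'; try apply is_lim_seq_const; apply sum_lim, ex_Phi; auto. }
    assert (B : forall N, D N <= / c2 - / c1).
    { intros N. unfold D. pose proof (finite_ineq c1 c2 N H1 H2). pose proof (psi_diff c1 c2 N H1 H2).
      nra. }
    pose proof (is_lim_seq_le D (fun _ => / c2 - / c1) _ _ B L (is_lim_seq_const _)).
    simpl in H3. exact H3. }
  assert (/ c2 < / c1) by (apply Rinv_lt_contravar; nra).
  apply (Rmult_lt_reg_r (phi c1 * phi c2)). nra.
  field_simplify; try lra.
Qed.
End Main.
Definition gf (s : R) := fun t => Rpower t (s - 1) * exp (- t).

Lemma ball_R (x y : R) (e : posreal) : Rabs (y - x) < e -> ball x e y.
Proof. intros H. exact H. Qed.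
Lemma ball_R_inv (x y : R) (e : posreal) : ball x e y -> Rabs (y - x) < e.
Proof. intros H. exact H. Qed.

Lemma gf_cont s t : 0 < t -> continuous (gf s) t.
Proof.
  intros Ht. apply (@ex_derive_continuous R_AbsRing R_NormedModule). unfold gf, Rpower.
  auto_derive. auto.
Qed.

Lemma gf_ex_RInt s a b : 0 < a -> 0 < b -> ex_RInt (gf s) a b.
Proof.
  intros Ha Hb. apply (@ex_RInt_continuous R_CompleteNormedModule). intros t Ht. apply gf_cont.
  assert (0 < Rmin a b) by (apply Rmin_glb_lt; auto). lra.
Qed.

Lemma gf_pos s t : 0 < t -> 0 < gf s t.
Proof. intros; unfold gf, Rpower; apply Rmult_lt_0_compat; apply exp_pos. Qed.

Lemma exp_le' x y : x <= y -> exp x <= exp y.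
Proof. intros [H|H]; [apply Rlt_le, exp_increasing; auto|subst; lra]. Qed.

Definition Cst (y : R) := (Rabs y + 1) * (ln (2 * (Rabs y + 1)) - 1).

Lemma ln_bound y t : 1 <= t -> y * ln t <= t / 2 + Cst y.
Proof.
  intros Ht. set (m := Rabs y + 1).
  assert (Hm : 0 < m) by (unfold m; pose proof (Rabs_pos y); lra).
  assert (Hl : 0 <= ln t) by (rewrite <- ln_1; apply ln_le; lra).
  assert (y * ln t <= m * ln t).
  { apply Rmult_le_compat_r; auto. unfold m. pose proof (Rle_abs y); lra. }
  assert (E : ln t = ln (t / (2 * m)) + ln (2 * m)).
  { rewrite <- ln_mult. f_equal. field. lra. apply Rdiv_lt_0_compat; lra. lra. }
  assert (ln (t / (2 * m)) <= t / (2 * m) - 1).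
  { pose proof (exp_ineq1_le (ln (t / (2 * m)))). rewrite exp_ln in H0. lra.
    apply Rdiv_lt_0_compat; lra. }
  unfold Cst; fold m.
  assert (m * ln t <= m * (t / (2 * m) - 1 + ln (2 * m))).
  { apply Rmult_le_compat_l; lra. }
  replace (m * (t / (2 * m) - 1 + ln (2 * m))) with (t / 2 + m * (ln (2 * m) - 1)) in H1 by (field; lra).
  lra.
Qed.

Lemma gf_bound_far s t : 1 <= t -> gf s t <= exp (Cst (s - 1)) * exp (- t / 2).
Proof.
  intros Ht. unfold gf, Rpower. rewrite <- !exp_plus.
  apply exp_le'. pose proof (ln_bound (s - 1) t Ht). lra.
Qed.


Lemma Rpower_derive s t : 0 < s -> 0 < t -> is_derive (fun u => Rpower u s / s) t (Rpower t (s - 1)).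
Proof.
  intros Hs Ht. unfold Rpower.
  evar (d : R). assert (H : is_derive (fun u => exp (s * ln u) / s) t d).
  { unfold d. auto_derive. auto. reflexivity. }
  replace (exp ((s - 1) * ln t)) with d. exact H.
  unfold d. replace ((s - 1) * ln t) with (s * ln t + - ln t) by ring.
  rewrite exp_plus, exp_Ropp, exp_ln by auto. field. lra.
Qed.

Lemma A_bound s e : 0 < s -> 0 < e <= 1 -> RInt (gf s) e 1 <= / s.
Proof.
  intros Hs He.
  assert (HI : is_RInt (fun t => Rpower t (s - 1)) e 1 (minus (Rpower 1 s / s) (Rpower e s / s))).
  { apply (is_RInt_derive (V := R_CompleteNormedModule) (fun u => Rpower u s / s)).
    - intros x Hx. apply Rpower_derive; auto. rewrite Rmin_left in Hx by lra. lra.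
    - intros x Hx. rewrite Rmin_left in Hx by lra.
      apply (@ex_derive_continuous R_AbsRing R_NormedModule). unfold Rpower. auto_derive. lra. }
  apply Rle_trans with (RInt (fun t => Rpower t (s - 1)) e 1).
  - apply RInt_le. lra. apply gf_ex_RInt; lra. eexists; exact HI.
    intros x Hx. unfold gf. rewrite <- (Rmult_1_r (Rpower x (s - 1))) at 2.
    apply Rmult_le_compat_l. unfold Rpower; apply Rlt_le, exp_pos.
    rewrite <- exp_0. apply exp_le'. lra.
  - rewrite (is_RInt_unique _ _ _ _ HI). unfold minus, plus, opp; simpl.
    unfold Rpower at 1. rewrite ln_1, Rmult_0_r, exp_0.
    assert (0 < Rpower e s) by (unfold Rpower; apply exp_pos).
    assert (0 < / s) by (apply Rinv_0_lt_compat; auto).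
    unfold Rdiv. nra.
Qed.

Definition KB s := exp (Cst (s - 1)).

Lemma B_bound s M : 1 <= M -> RInt (gf s) 1 M <= 2 * KB s.
Proof.
  intros HM.
  assert (HK : 0 < KB s) by apply exp_pos.
  assert (HI : is_RInt (fun t => KB s * exp (- t / 2)) 1 M
                 (minus (- 2 * KB s * exp (- M / 2)) (- 2 * KB s * exp (- 1 / 2)))).
  { apply (is_RInt_derive (V := R_CompleteNormedModule) (fun u => - 2 * KB s * exp (- u / 2))).
    - intros x Hx. evar (d : R).
      assert (H : is_derive (fun u => - 2 * KB s * exp (- u / 2)) x d).
      { unfold d; auto_derive; [auto|reflexivity]. }
      replace (KB s * exp (- x / 2)) with d. exact H. unfold d, Rdiv. lra.
    - intros x Hx. apply (@ex_derive_continuous R_AbsRing R_NormedModule). auto_derive. auto. }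
  apply Rle_trans with (RInt (fun t => KB s * exp (- t / 2)) 1 M).
  - apply RInt_le. lra. apply gf_ex_RInt; lra. eexists; exact HI.
    intros x Hx. apply gf_bound_far; lra.
  - rewrite (is_RInt_unique _ _ _ _ HI). unfold minus, plus, opp; simpl.
    pose proof (exp_pos (- M / 2)).
    assert (exp (- 1 / 2) <= 1) by (rewrite <- exp_0; apply exp_le'; lra).
    nra.
Qed.

Lemma mono_lim_pinf (g : R -> R) (K : R) :
  (forall x y, 1 <= x <= y -> g x <= g y) -> (forall x, 1 <= x -> g x <= K) ->
  exists L, filterlim g (Rbar_locally p_infty) (locally L) /\ (forall x, 1 <= x -> g x <= L).
Proof.
  intros Hm Hb.
  set (E := fun y => exists x, 1 <= x /\ y = g x).
  assert (bE : bound E) by (exists K; intros y [x [Hx ->]]; apply Hb; auto).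
  assert (nE : exists y, E y) by (exists (g 1); exists 1; split; [lra|auto]).
  destruct (completeness E bE nE) as [L [HL1 HL2]].
  exists L. split.
  - apply (filterlim_locally (F := Rbar_locally p_infty)). intros eps.
    destruct (classic (exists x, 1 <= x /\ L - eps < g x)) as [[x0 [Hx0 Hg]]|Hn].
    + exists x0. intros x Hx. apply ball_R.
      assert (g x0 <= g x) by (apply Hm; lra).
      assert (g x <= L) by (apply HL1; exists x; split; [lra|auto]).
      apply Rabs_lt_between'. lra.
    + exfalso. assert (L <= L - eps).
      { apply HL2. intros y [x [Hx ->]]. apply Rnot_lt_le. intros Hlt. apply Hn. exists x; auto. }
      pose proof (cond_pos eps). lra.
  - intros x Hx. apply HL1. exists x; auto.
Qed.

Lemma mono_lim_0 (g : R -> R) (K : R) :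
  (forall x y, 0 < x <= y -> y <= 1 -> g y <= g x) -> (forall x, 0 < x <= 1 -> g x <= K) ->
  exists L, filterlim g (at_right 0) (locally L) /\ (forall x, 0 < x <= 1 -> g x <= L).
Proof.
  intros Hm Hb.
  set (E := fun y => exists x, 0 < x <= 1 /\ y = g x).
  assert (bE : bound E) by (exists K; intros y [x [Hx ->]]; apply Hb; auto).
  assert (nE : exists y, E y) by (exists (g 1); exists 1; split; [lra|auto]).
  destruct (completeness E bE nE) as [L [HL1 HL2]].
  exists L. split.
  - apply (filterlim_locally (F := at_right 0)). intros eps.
    destruct (classic (exists x, (0 < x <= 1) /\ L - eps < g x)) as [[x0 [Hx0 Hg]]|Hn].
    + assert (Hx0p : 0 < x0) by lra.
      exists (mkposreal x0 Hx0p). intros x Hx Hxp. apply ball_R.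
      apply ball_R_inv in Hx. simpl in Hx. rewrite Rminus_0_r, Rabs_pos_eq in Hx by lra.
      assert (g x0 <= g x) by (apply Hm; lra).
      assert (g x <= L) by (apply HL1; exists x; split; [lra|auto]).
      apply Rabs_lt_between'. lra.
    + exfalso. assert (L <= L - eps).
      { apply HL2. intros y [x [Hx ->]]. apply Rnot_lt_le. intros Hlt. apply Hn. exists x; auto. }
      pose proof (cond_pos eps). lra.
  - intros x Hx. apply HL1. exists x; auto.
Qed.


Lemma lim_to_RInt_gen (F G : (R -> Prop) -> Prop) (FF : Filter F) (FG : Filter G) (f : R -> R) l :
  filter_prod F G (fun ab => ex_RInt f (fst ab) (snd ab)) ->
  filterlim (fun ab => RInt f (fst ab) (snd ab)) (filter_prod F G) (locally l) ->
  is_RInt_gen f F G l.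
Proof.
  intros Hex Hlim P HP. specialize (Hlim P HP).
  unfold filtermapi. unfold filtermap in Hlim.
  apply (filter_imp (fun ab => ex_RInt f (fst ab) (snd ab) /\ P (RInt f (fst ab) (snd ab)))).
  - intros ab [H1 H2]. exists (RInt f (fst ab) (snd ab)). split; auto. apply (RInt_correct (V := R_CompleteNormedModule)); auto.
  - apply filter_and; auto.
Qed.

Lemma ev_right : at_right 0 (fun a => 0 < a < 1).
Proof.
  exists (mkposreal 1 Rlt_0_1). intros x Hx Hxp. apply ball_R_inv in Hx. simpl in Hx.
  rewrite Rminus_0_r, Rabs_pos_eq in Hx by lra. lra.
Qed.

Lemma ev_pinf : Rbar_locally p_infty (fun b => 1 < b).
Proof. exists 1. auto. Qed.

Definition PF := filter_prod (at_right 0) (Rbar_locally p_infty).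

Lemma ev_PF : PF (fun ab => 0 < fst ab < 1 /\ 1 < snd ab).
Proof.
  exists (fun a => 0 < a < 1) (fun b => 1 < b). apply ev_right. apply ev_pinf.
  intros x y Hx Hy; simpl; auto.
Qed.

Lemma Gamma_char s : 0 < s ->
  filterlim (fun ab => RInt (gf s) (fst ab) (snd ab)) PF (locally (Gamma s))
  /\ RInt (gf s) 1 2 <= Gamma s.
Proof.
  intros Hs.
  set (A := fun e => RInt (gf s) e 1).
  set (B := fun M => RInt (gf s) 1 M).
  destruct (mono_lim_0 A (/ s)) as [LA [HA1 HA2]].
  { intros x y Hxy Hy1. unfold A.
    rewrite <- (RInt_Chasles (V := R_CompleteNormedModule) (gf s) x y 1) by (apply gf_ex_RInt; lra).
    assert (0 <= RInt (gf s) x y).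
    { apply RInt_ge_0. lra. apply gf_ex_RInt; lra. intros t Ht. apply Rlt_le, gf_pos; lra. }
    change (plus (RInt (gf s) x y) (RInt (gf s) y 1)) with (RInt (gf s) x y + RInt (gf s) y 1). lra. }
  { intros x Hx. apply A_bound; auto. }
  destruct (mono_lim_pinf B (2 * KB s)) as [LB [HB1 HB2]].
  { intros x y Hxy. unfold B.
    rewrite <- (RInt_Chasles (V := R_CompleteNormedModule) (gf s) 1 x y) by (apply gf_ex_RInt; lra).
    assert (0 <= RInt (gf s) x y).
    { apply RInt_ge_0. lra. apply gf_ex_RInt; lra. intros t Ht. apply Rlt_le, gf_pos; lra. }
    change (plus (RInt (gf s) 1 x) (RInt (gf s) x y)) with (RInt (gf s) 1 x + RInt (gf s) x y). lra. }
  { intros x Hx. apply B_bound; auto. }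
  assert (Hlim : filterlim (fun ab => RInt (gf s) (fst ab) (snd ab)) PF (locally (LA + LB))).
  { apply (filterlim_ext_loc (fun ab => A (fst ab) + B (snd ab))).
    { eapply filter_imp; [|exact ev_PF]. intros [a b] [Ha Hb]; simpl in *.
      unfold A, B. symmetry.
      rewrite <- (RInt_Chasles (V := R_CompleteNormedModule) (gf s) a 1 b) by (apply gf_ex_RInt; lra).
      reflexivity. }
    apply (filterlim_comp_2 (F := PF) (G := locally LA) (H := locally LB) (fun ab => A (fst ab)) (fun ab => B (snd ab)) Rplus).
    - eapply filterlim_comp; [apply filterlim_fst|exact HA1].
    - eapply filterlim_comp; [apply filterlim_snd|exact HB1].
    - apply (filterlim_plus (K := R_AbsRing) (V := R_NormedModule) LA LB). }
  assert (HG : Gamma s = LA + LB).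
  { unfold Gamma. change (fun t => Rpower t (s - 1) * exp (- t)) with (gf s).
    apply is_RInt_gen_unique. apply lim_to_RInt_gen; try typeclasses eauto.
    - eapply filter_imp; [|exact ev_PF]. intros [a b] [Ha Hb]; simpl in *. apply gf_ex_RInt; lra.
    - exact Hlim. }
  rewrite HG. split; auto.
  assert (HA0 : 0 <= LA).
  { replace 0 with (A 1) by (unfold A; rewrite RInt_point; reflexivity). apply HA2; lra. }
  assert (B 2 <= LB) by (apply HB2; lra). unfold B in *. lra.
Qed.

Lemma Gamma_pos s : 0 < s -> 0 < Gamma s.
Proof.
  intros Hs. destruct (Gamma_char s Hs) as [_ H].
  set (k := exp (- (Rabs (s - 1) * ln 2) - 2)).
  assert (Hk : 0 < k) by apply exp_pos.
  assert (k <= RInt (gf s) 1 2).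
  { replace k with (RInt (fun _ => k) 1 2).
    2:{ rewrite RInt_const. unfold scal; simpl; unfold mult; simpl. ring. }
    apply RInt_le. lra. apply (@ex_RInt_continuous R_CompleteNormedModule). intros; apply continuous_const.
    apply gf_ex_RInt; lra.
    intros t Ht. unfold gf, k, Rpower. rewrite <- exp_plus. apply exp_le'.
    assert (0 <= ln t) by (rewrite <- ln_1; apply ln_le; lra).
    assert (ln t <= ln 2) by (apply ln_le; lra).
    assert (- (Rabs (s - 1) * ln t) <= (s - 1) * ln t).
    { destruct (Rle_dec 0 (s - 1)).
      - rewrite Rabs_pos_eq by auto. nra.
      - rewrite Rabs_left by lra. nra. }
    assert (Rabs (s - 1) * ln t <= Rabs (s - 1) * ln 2).
    { apply Rmult_le_compat_l; auto. apply Rabs_pos. }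
    lra. }
  lra.
Qed.

Lemma Rpower_m1 t s : 0 < t -> Rpower t (s - 1) = Rpower t s / t.
Proof.
  intros Ht. unfold Rpower. replace ((s - 1) * ln t) with (s * ln t + - ln t) by ring.
  rewrite exp_plus, exp_Ropp, exp_ln by auto. reflexivity.
Qed.

Lemma FE_finite s a b : 0 < s -> 0 < a -> 0 < b ->
  RInt (gf (s + 1)) a b = Rpower a s * exp (- a) - Rpower b s * exp (- b) + s * RInt (gf s) a b.
Proof.
  intros Hs Ha Hb.
  assert (Hm : 0 < Rmin a b) by (apply Rmin_glb_lt; auto).
  assert (HI : is_RInt (fun t => gf (s + 1) t - s * gf s t) a b
                 (minus (- Rpower b s * exp (- b)) (- Rpower a s * exp (- a)))).
  { apply (is_RInt_derive (V := R_CompleteNormedModule) (fun t => - Rpower t s * exp (- t))).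
    - intros x Hx. evar (d : R).
      assert (H : is_derive (fun t => - Rpower t s * exp (- t)) x d).
      { unfold d, Rpower. auto_derive. lra. reflexivity. }
      replace (gf (s + 1) x - s * gf s x) with d. exact H.
      unfold d, gf. replace (s + 1 - 1) with s by ring. rewrite Rpower_m1 by lra.
      unfold Rpower. field. lra.
    - intros x Hx. apply (@ex_derive_continuous R_AbsRing R_NormedModule).
      unfold gf, Rpower. auto_derive. lra. }
  assert (HJ := RInt_correct (V := R_CompleteNormedModule) (gf s) a b (gf_ex_RInt s a b Ha Hb)).
  pose proof (is_RInt_plus _ _ _ _ _ _ HI (is_RInt_scal _ _ _ s _ HJ)) as HK.
  apply is_RInt_unique.
  assert (E : plus (minus (- Rpower b s * exp (- b)) (- Rpower a s * exp (- a)))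
       (scal s (RInt (gf s) a b)) = Rpower a s * exp (- a) - Rpower b s * exp (- b) + s * RInt (gf s) a b).
  { unfold minus; unfold plus, opp, scal; simpl; unfold mult; simpl. ring. }
  rewrite <- E.
  eapply is_RInt_ext; [|exact HK].
  intros x _. unfold plus, scal; simpl; unfold mult; simpl. ring.
Qed.

Lemma lim_L0 s : 0 < s -> filterlim (fun a => Rpower a s * exp (- a)) (at_right 0) (locally 0).
Proof.
  intros Hs. apply (filterlim_locally (F := at_right 0)). intros eps.
  assert (Hd : 0 < Rpower eps (/ s)) by (unfold Rpower; apply exp_pos).
  exists (mkposreal _ Hd). intros x Hx Hxp. apply ball_R.
  apply ball_R_inv in Hx. simpl in Hx. rewrite Rminus_0_r, Rabs_pos_eq in Hx by lra.
  rewrite Rminus_0_r. 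
  assert (H1 : Rpower x s < Rpower (Rpower eps (/ s)) s) by (apply Rlt_Rpower_l; lra).
  rewrite Rpower_mult, Rinv_l, Rpower_1 in H1 by (try apply cond_pos; lra).
  assert (H2 : exp (- x) <= 1) by (rewrite <- exp_0; apply exp_le'; lra).
  assert (H3 : 0 < Rpower x s) by (unfold Rpower; apply exp_pos).
  assert (H4 : 0 < exp (- x)) by apply exp_pos.
  rewrite Rabs_pos_eq by nra. nra.
Qed.

Lemma lim_Linf s : filterlim (fun b => Rpower b s * exp (- b)) (Rbar_locally p_infty) (locally 0).
Proof.
  apply (filterlim_locally (F := Rbar_locally p_infty)). intros eps.
  exists (Rmax 1 (2 * (Cst s - ln eps))). intros x Hx. apply ball_R.
  assert (Hx1 : 1 < x) by (eapply Rle_lt_trans; [apply Rmax_l|exact Hx]).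
  assert (Hx2 : 2 * (Cst s - ln eps) < x) by (eapply Rle_lt_trans; [apply Rmax_r|exact Hx]).
  rewrite Rminus_0_r. unfold Rpower. rewrite <- exp_plus. rewrite Rabs_pos_eq by (apply Rlt_le, exp_pos).
  rewrite <- (exp_ln eps) by apply cond_pos. apply exp_increasing.
  pose proof (ln_bound s x ltac:(lra)). lra.
Qed.

Lemma Gamma_FE s : 0 < s -> Gamma (s + 1) = s * Gamma s.
Proof.
  intros Hs.
  destruct (Gamma_char (s + 1) ltac:(lra)) as [H1 _].
  destruct (Gamma_char s Hs) as [H2 _].
  assert (H3 : filterlim (fun ab => Rpower (fst ab) s * exp (- fst ab) + (- (Rpower (snd ab) s * exp (- snd ab)))
                         + s * RInt (gf s) (fst ab) (snd ab)) PF (locally (0 + - 0 + s * Gamma s))).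
  { apply (filterlim_comp_2 (F := PF) (G := locally (0 + - 0)) (H := locally (s * Gamma s)) _ _ Rplus).
    - apply (filterlim_comp_2 (F := PF) (G := locally 0) (H := locally (- 0)) _ _ Rplus).
      + apply (filterlim_comp _ _ _ fst (fun a => Rpower a s * exp (- a)) PF (at_right 0)).
        apply filterlim_fst. apply lim_L0; auto.
      + apply (filterlim_comp _ _ _ snd (fun b => - (Rpower b s * exp (- b))) PF (Rbar_locally p_infty)).
        apply filterlim_snd.
        apply (filterlim_comp _ _ _ (fun b => Rpower b s * exp (- b)) Ropp _ (locally 0)).
        apply lim_Linf. apply (filterlim_opp (K := R_AbsRing) (V := R_NormedModule) 0).
      + apply (filterlim_plus (K := R_AbsRing) (V := R_NormedModule)).
    - apply (filterlim_comp_2 (F := PF) (G := locally s) (H := locally (Gamma s)) (fun _ => s) _ Rmult).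
      + apply filterlim_const.
      + exact H2.
      + apply (filterlim_mult (K := R_AbsRing)).
    - apply (filterlim_plus (K := R_AbsRing) (V := R_NormedModule)). }
  assert (H4 : filterlim (fun ab => RInt (gf (s + 1)) (fst ab) (snd ab)) PF (locally (0 + - 0 + s * Gamma s))).
  { eapply filterlim_ext_loc; [|exact H3].
    eapply filter_imp; [|exact ev_PF]. intros [a b] [Ha Hb]; simpl in *.
    rewrite FE_finite by lra. ring. }
  assert (HP : ProperFilter' PF) by (apply filter_prod_proper'; typeclasses eauto).
  pose proof (filterlim_locally_unique (K := R_AbsRing) (V := R_NormedModule) (F := PF) _ _ _ H1 H4).
  rewrite H. ring.
Qed.

Lemma Gamma_poch s k : 0 < s -> Gamma (INR k + s) = Gamma s * poch s k.
Proof.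
  intros Hs. induction k as [|k IH].
  - simpl. rewrite Rplus_0_l. ring.
  - rewrite S_INR. replace (INR k + 1 + s) with ((INR k + s) + 1) by ring.
    rewrite Gamma_FE by (pose proof (pos_INR k); lra). rewrite IH. simpl. ring.
Qed.

Lemma lommel_eq mu nu x a c : 0 < x -> a = (mu - nu + 3) / 2 -> c = (mu + nu + 3) / 2 ->
  0 < a -> 0 < c ->
  lommel_t mu nu x = Rpower (x / 2) (mu + 1) / (Gamma a * Gamma c) * phi a (Rpower (x / 2) 2) c.
Proof.
  intros Hx Ea Ec Ha Hc. unfold lommel_t, phi. rewrite <- Series_scal_l.
  apply Series_ext. intros k. unfold lommel_t_term. rewrite <- Ea, <- Ec.
  rewrite !Gamma_poch by auto.
  unfold tphi, pk.
  replace (mu + 2 * INR k + 1) with ((mu + 1) + 2 * INR k) by ring.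
  rewrite Rpower_plus. rewrite <- Rpower_mult. rewrite Rpower_pow by (unfold Rpower; apply exp_pos).
  pose proof (Gamma_pos a Ha). pose proof (Gamma_pos c Hc).
  pose proof (poch_pos a k Ha). pose proof (poch_pos c k Hc).
  field. repeat split; lra.
Qed.

Lemma psi_eq a z c : 0 < c -> psi a z c = phi a z (c + 1) / c.
Proof.
  intros Hc. unfold psi, phi. unfold Rdiv. rewrite Rmult_comm, <- Series_scal_l.
  apply Series_ext. intros k. unfold tpsi, tphi, gk. rewrite poch_shift.
  pose proof (poch_pos (c + 1) k ltac:(lra)). field. lra.
Qed.

Lemma ratio_eq mu nu x d : 0 < x -> 0 < (mu - nu + 3) / 2 -> 0 < (mu + nu + 3) / 2 + d ->
  lommel_t (mu + d + 1) (nu + d + 1) x / lommel_t (mu + d) (nu + d) x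
  = (x / 2) * (psi ((mu - nu + 3) / 2) (Rpower (x / 2) 2) ((mu + nu + 3) / 2 + d)
               / phi ((mu - nu + 3) / 2) (Rpower (x / 2) 2) ((mu + nu + 3) / 2 + d)).
Proof.
  intros Hx Ha Hc. set (a := (mu - nu + 3) / 2). set (c := (mu + nu + 3) / 2 + d).
  set (z := Rpower (x / 2) 2).
  rewrite (lommel_eq (mu + d + 1) (nu + d + 1) x a (c + 1)); auto; try (unfold a, c; field); try lra.
  rewrite (lommel_eq (mu + d) (nu + d) x a c); auto; try (unfold a, c; field).
  rewrite Gamma_FE by auto. rewrite psi_eq by auto.
  replace (mu + d + 1 + 1) with ((mu + d + 1) + 1) by ring.
  rewrite Rpower_plus, Rpower_1 by lra.
  assert (0 < Rpower (x / 2) (mu + d + 1)) by (unfold Rpower; apply exp_pos).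
  pose proof (Gamma_pos a Ha). pose proof (Gamma_pos c Hc).
  assert (0 < z) by (unfold z, Rpower; apply exp_pos).
  pose proof (phi_pos a z Ha H2 c Hc).
  assert (Hc0 : 0 < c) by exact Hc. fold z. clearbody a c z. field. repeat split; lra.
  unfold c; lra.
Qed.

Theorem theorem3p2 (mu nu x : R) :
  -3 < mu -> Rabs nu < mu + 3 -> 0 < x ->
  forall d1 d2 : R, 0 < d1 -> d1 < d2 ->
    lommel_t (mu + d2 + 1) (nu + d2 + 1) x / lommel_t (mu + d2) (nu + d2) x
    < lommel_t (mu + d1 + 1) (nu + d1 + 1) x / lommel_t (mu + d1) (nu + d1) x.
Proof.
  intros Hmu Hnu Hx d1 d2 Hd1 Hd12.
  assert (Ha : 0 < (mu - nu + 3) / 2).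
  { pose proof (Rle_abs nu). lra. }
  assert (Hb : 0 < (mu + nu + 3) / 2).
  { pose proof (Rle_abs (- nu)). rewrite Rabs_Ropp in H. lra. }
  rewrite !ratio_eq by (auto; lra).
  apply Rmult_lt_compat_l; [lra|].
  apply main_ineq; auto.
  - unfold Rpower; apply exp_pos.
  - lra.
  - lra.
Qed.
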